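(* Let $K$ be a CMI and let $K'$ be a sub-CMI of $K$. For any joint distribution of $X_1,\dots,X_n$, if $K$ is valid then $K'$ is valid.
   Context: Setting: $X_1,\dots,X_n$ jointly distributed discrete random variables with $H(X_i)<\infty$; distribution unspecified. $X_\alpha=(X_i,i\in\alpha)$, $X_\emptyset$ constant. A CMI is $K=(C,\langle Q_1,\dots,Q_k\rangle)$, $k\ge0$, $C\subseteq\{1,\dots,n\}$, $\langle\cdot\rangle$ an unordered multiset of subsets; valid (for a given distribution) if $\sum_iH(X_{Q_i}|X_C)-H(X_{Q_1},\dots,X_{Q_k}|X_C)=0$. Empty members may be deleted. Degenerate = valid for every distribution; all degenerate CMIs are identified and written $(\cdot,\langle\ \rangle)$. $\mathrm{pur}(K)=(C,\langle Q_i\setminus C:Q_i\setminus C\ne\emptyset\rangle)$. For pure $K$: $\mathbb I_K$ = indices lying in at least two members of the collection if $k\ge2$, else $\emptyset$; $P_1,\dots,P_t$ the nonempty sets among $Q_i\setminus\mathbb I_K$; $\mathrm{can}(K)=(\cdot,\langle\ \rangle)$ if $k\le1$, $(C,\langle\mathbb I_K,\mathbb I_K\rangle)$ if $k\ge2,\mathbb I_K\ne\emptyset,t\le1$, $(C,\langle P_1..P_t\rangle)$ if $k\ge2,\mathbb I_K=\emptyset$, $(C,\langle\mathbb I_K,\mathbb I_K,P_1..P_t\rangle)$ if $k\ge2,\mathbb I_K\ne\emptyset,t\ge2$. For general $K$, $\mathbb I_K$ is the repeated-index set of $\mathrm{pur}(K)$ and $\mathrm{can}(\mathrm{pur}(K))$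 is written $(C,\langle\mathbb I_K,\mathbb I_K,P_i,1\le i\le t\rangle)$ (copies of $\mathbb I_K$ omitted if empty; degenerate $K$ has $\mathbb I_K=\emptyset$, $t\in\{0,1\}$). $P=\bigcup_iP_i$, $S=C\cup P$. $R_K^{K'}$: with $\mathrm{can}(\mathrm{pur}(K'))=(C',\langle\mathbb I_{K'},\mathbb I_{K'},P'_j,1\le j\le s\rangle)$, $D=\mathbb I_{K'}\setminus\mathbb I_K$ and $T_1,\dots,T_u$ the nonempty sets among $P'_j\setminus\mathbb I_K$: $R_K^{K'}=(\cdot,\langle\ \rangle)$ if $D=\emptyset,u\le1$; $(C'\setminus\mathbb I_K,\langle T_1..T_u\rangle)$ if $D=\emptyset,u\ge2$; $(C'\setminus\mathbb I_K,\langle D,D\rangle)$ if $D\ne\emptyset,u\le1$; $(C'\setminus\mathbb I_K,\langle D,D,T_1..T_u\rangle)$ if $D\ne\emptyset,u\ge2$. Sub-CMI: with $K''=R_K^{K'}$, $\mathrm{can}(\mathrm{pur}(K''))=(C'',\langle\mathbb I_{K''},\mathbb I_{K''},P''_j,1\le j\le r\rangle)$, $P''=\bigcup_jP''_j$, $K'$ is a sub-CMI of $K$ if: (i) $K'=(\cdot,\langle\ \rangle)$; or (ii) $\mathrm{can}(\mathrm{pur}(K''))=(\cdot,\langle\ \rangle)$ and $C\subseteq C'$; or (iii) $\mathrm{can}(\mathrm{pur}(K''))\ne(\cdot,\langle\ \rangle)$, $\mathbb I_{K''}=\emptyset$, $P''\subseteq P$, $C\subseteq C''\subseteq S\setminus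 P''$, and whenever $m_1\in P''_{j_1}$, $m_2\in P''_{j_2}$ with $j_1\ne j_2$, then $m_1\in P_{i_1}$, $m_2\in P_{i_2}$ with $i_1\ne i_2$. *)

(* Defs.v *)
From HB Require Import structures.
From mathcomp Require Import all_boot all_order all_algebra.
From mathcomp Require Import all_classical all_reals all_analysis.
From mathcomp Require Import Rstruct.
Set Implicit Arguments. Unset Strict Implicit. Unset Printing Implicit Defensive.
Import Order.TTheory GRing.Theory Num.Theory.
Local Open Scope ring_scope.
Local Notation fset0 := (@finset.set0 _).

(* A joint outcome of (X_1,...,X_n); each X_i is discrete, its (countable)
   value set being encoded in nat. *)
Definition outcome (n : nat) := {ffun 'I_n -> nat}.

Definition is_dist (n : nat) (p : outcome n -> Rdefinitions.R) : Prop :=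
  (forall x, 0 <= p x) /\ (\esum_(x in [set: outcome n]) (p x)%:E = 1%E).

Definition marg (n : nat) (p : outcome n -> Rdefinitions.R) (A : {set 'I_n})
  (v : outcome n) : Rdefinitions.R :=
  fine (\esum_(x in [set x : outcome n | forall i, i \in A -> x i = v i]) (p x)%:E).

(* joint entropy H(X_A) (possibly +oo), natural logarithm, 0 log 0 = 0;
   the values of X_A are represented by outcomes that are 0 outside A *)
Definition ent (n : nat) (p : outcome n -> Rdefinitions.R) (A : {set 'I_n}) : \bar Rdefinitions.R :=
  \esum_(v in [set v : outcome n | forall i, i \notin A -> v i = 0%N])
     (- (marg p A v * ln (marg p A v)))%:E.

Definition finite_ent (n : nat) (p : outcome n -> Rdefinitions.R) : Prop :=
  forall i : 'I_n, (ent p [set i] < +oo)%E.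

Definition H (n : nat) (p : outcome n -> Rdefinitions.R) (A : {set 'I_n}) : Rdefinitions.R :=
  fine (ent p A).

Definition condH (n : nat) (p : outcome n -> Rdefinitions.R) (Q C : {set 'I_n}) : Rdefinitions.R :=
  H p (Q :|: C) - H p C.

(* K = (C, <Q_1,...,Q_k>); the multiset is represented by a list (all
   notions below are invariant under permutation of the list). *)
Record cmi (n : nat) := Cmi { cond : {set 'I_n}; mems : seq {set 'I_n} }.

Definition bigU (n : nat) (s : seq {set 'I_n}) : {set 'I_n} := \big[@finset.setU _/fset0]_(Q <- s) Q.

Definition valid (n : nat) (p : outcome n -> Rdefinitions.R) (K : cmi n) : Prop :=
  \sum_(Q <- mems K) condH p Q (cond K)
  - condH p (bigU (mems K)) (cond K) = 0.

Definition degenerate (n : nat) (K : cmi n) : Prop :=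
  forall p : outcome n -> Rdefinitions.R, is_dist p -> finite_ent p -> valid p K.

Definition nonempties (n : nat) (s : seq {set 'I_n}) : seq {set 'I_n} :=
  [seq Q <- s | Q != fset0].

Definition pur (n : nat) (K : cmi n) : cmi n :=
  Cmi (cond K) (nonempties [seq Q :\: cond K | Q <- mems K]).

Definition rep_idx (n : nat) (s : seq {set 'I_n}) : {set 'I_n} :=
  if (2 <= size s)%N then finset.finset (fun i : 'I_n => (2 <= count (fun Q : {set 'I_n} => i \in Q) s)%N) else fset0.

(* a canonical form (C, <I, I, P_1, ..., P_t>) (copies of I omitted if I = fset0) *)
Record canform (n : nat) := Canform { cC : {set 'I_n}; cI : {set 'I_n}; cP : seq {set 'I_n} }.

Definition cmi_of_canform (n : nat) (f : canform n) : cmi n :=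
  Cmi (cC f) ((if cI f == fset0 then [::] else [:: cI f; cI f]) ++ cP f).

(* can(K) for pure K; None stands for the degenerate symbol (., < >) *)
Definition can (n : nat) (K : cmi n) : option (canform n) :=
  let s := mems K in
  if (size s <= 1)%N then None else
  let I := rep_idx s in
  let ps := nonempties [seq Q :\: I | Q <- s] in
  if (I != fset0) && (size ps <= 1)%N then Some (Canform (cond K) I [::])
  else Some (Canform (cond K) I ps).

(* I_K and the list P_1..P_t of K (for degenerate K: I_K = fset0 and the at most
   one member of pur(K)) *)
Definition IK (n : nat) (K : cmi n) : {set 'I_n} := rep_idx (mems (pur K)).
Definition PK (n : nat) (K : cmi n) : seq {set 'I_n} :=
  match can (pur K) with Some f => cP f | None => mems (pur K) end.

(* R_K^{K'}; None stands for (., < >).  When can(pur(K')) is itself the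
   degenerate symbol, K' is degenerate and case (i) of the sub-CMI
   definition applies, so the value chosen there is irrelevant. *)
Definition Rcmi (n : nat) (K K' : cmi n) : option (cmi n) :=
  match can (pur K') with
  | None => None
  | Some f =>
    let I := IK K in
    let D := cI f :\: I in
    let T := nonempties [seq P :\: I | P <- cP f] in
    let C'' := cC f :\: I in
    if D == fset0 then
      (if (size T <= 1)%N then None else Some (Cmi C'' T))
    else
      (if (size T <= 1)%N then Some (Cmi C'' [:: D; D]) else Some (Cmi C'' [:: D, D & T]))
  end.

Definition sub_cmi (n : nat) (K K' : cmi n) : Prop :=
  let canK'' := obind (fun K'' => can (pur K'')) (Rcmi K K') in
  let P := bigU (PK K) in
  let S := cond K :|: P in
  degenerate K'
  \/ (canK'' = None /\ cond K \subset cond K')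
  \/ (exists f : canform n,
        [/\ canK'' = Some f, cI f = fset0,
            bigU (cP f) \subset P,
            cond K \subset cC f /\ cC f \subset S :\: bigU (cP f) &
            forall (j1 j2 : nat) (m1 m2 : 'I_n),
              (j1 < size (cP f))%N -> (j2 < size (cP f))%N -> j1 <> j2 ->
              m1 \in nth fset0 (cP f) j1 -> m2 \in nth fset0 (cP f) j2 ->
              exists i1 i2 : nat,
                [/\ (i1 < size (PK K))%N, (i2 < size (PK K))%N, i1 <> i2,
                    m1 \in nth fset0 (PK K) i1 & m2 \in nth fset0 (PK K) i2]]).

(* Main.v *)
Require Import Defs.
From mathcomp Require Import all_boot all_order all_algebra.
From mathcomp Require Import all_classical all_reals all_analysis.
From mathcomp Require Import Rstruct ring lra.
Set Implicit Arguments. Unset Strict Implicit. Unset Printing Implicit Defensive.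
Import Order.TTheory GRing.Theory Num.Theory.
Local Open Scope classical_set_scope.
Local Open Scope ring_scope.

Notation RR := Rdefinitions.R.

Lemma esumZ (T : choiceType) (S : set T) (r : RR) (a : T -> \bar RR) :
  (0 <= r)%R -> (forall x, 0 <= a x)%E ->
  (\esum_(i in S) (r%:E * a i) = r%:E * \esum_(i in S) a i)%E.
Proof.
move=> r0 a0; rewrite /esum -ereal_supZl //; last first.
  by apply/set0P; exists 0%E; exists set0; [exact: fsets_set0 | rewrite fsbig_set0].
congr ereal_sup; apply/seteqP; split => x /=.
  by move=> [F FS <-]; exists (\sum_(i \in F) a i)%E; [exists F|rewrite ge0_mule_fsumr].
by move=> [y [F FS <-] <-]; exists F => //; rewrite ge0_mule_fsumr.
Qed.

Lemma esum_swap (T1 T2 : choiceType) (f : T1 -> T2 -> \bar RR) :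
  (forall x y, 0 <= f x y)%E ->
  (\esum_(x in [set: T1]) \esum_(y in [set: T2]) f x y =
   \esum_(y in [set: T2]) \esum_(x in [set: T1]) f x y)%E.
Proof.
move=> f0; rewrite !esum_esum //.
rewrite (reindex_esum ([set: T2] `*`` (fun=> [set: T1])) _ (fun x => (x.2, x.1))) //.
split => //=.
- by move=> [i1 i2] [j1 j2] /= _ _ [] -> ->.
- by move=> [i1 i2] _ /=; exists (i2, i1).
Qed.

Lemma esum_subset (T : choiceType) (S S' : set T) (a : T -> \bar RR) :
  S `<=` S' -> (forall x, 0 <= a x)%E -> (\esum_(i in S) a i <= \esum_(i in S') a i)%E.
Proof.
move=> sS a0; rewrite esum_mkcond [X in (_ <= X)%E]esum_mkcond; apply: le_esum => i _.
case: ifPn => iS; first by rewrite ifT //; apply/mem_set/sS/set_mem.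
by case: ifP.
Qed.

Local Notation fset0 := (@finset.set0 _).

Section Ent.
Variable n : nat.
Variable p : outcome n -> RR.
Hypothesis p0 : forall x, 0 <= p x.
Hypothesis p1 : (\esum_(x in [set: outcome n]) (p x)%:E = 1)%E.
Implicit Types (A B : {set 'I_n}) (x y z v : outcome n).

Definition fib A v : set (outcome n) := [set x | forall i, i \in A -> x i = v i].

Lemma fib_le1 (S : set (outcome n)) : (\esum_(x in S) (p x)%:E <= 1)%E.
Proof. by rewrite -p1; apply: esum_subset => // x; rewrite lee_fin. Qed.

Lemma fibE A v : (\esum_(x in fib A v) (p x)%:E)%E = (marg p A v)%:E.
Proof.
rewrite /marg fineK // ge0_fin_numE; last by apply: esum_ge0 => x _; rewrite lee_fin.
by apply: (le_lt_trans (fib_le1 _)); rewrite ltry.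
Qed.

Lemma mg_ge0 A v : 0 <= marg p A v.
Proof. by rewrite -lee_fin -fibE; apply: esum_ge0 => x _; rewrite lee_fin. Qed.

Lemma mg_le1 A v : marg p A v <= 1.
Proof. by rewrite -lee_fin -fibE; apply: fib_le1. Qed.

Lemma p_le_mg A v : p v <= marg p A v.
Proof.
rewrite -lee_fin -fibE -(@esum_set1 _ _ v (fun x => (p x)%:E)) ?lee_fin //.
by apply: esum_subset => [x /= -> //|x]; rewrite lee_fin.
Qed.

Lemma mg_eq A x y : (forall i, i \in A -> x i = y i) -> marg p A x = marg p A y.
Proof.
move=> E; rewrite /marg; congr (fine (esum _ _)); apply/seteqP; split => z /= H i iA.
  by rewrite H // E.
by rewrite H // E.
Qed.

Lemma mg_mono A B x : A \subset B -> marg p B x <= marg p A x.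
Proof.
move=> /fintype.subsetP sAB; rewrite -!lee_fin -!fibE; apply: esum_subset => [z /= H i iA|z].
  by apply: H; apply: sAB.
by rewrite lee_fin.
Qed.

Lemma mg_gt0 A x : 0 < p x -> 0 < marg p A x.
Proof. by move=> px; apply: lt_le_trans px (p_le_mg _ _). Qed.

Definition proj A x : outcome n := [ffun i => if i \in A then x i else 0%N].

Lemma esum_part A (g : outcome n -> \bar RR) : (forall x, 0 <= g x)%E ->
  (\esum_(x in [set: outcome n]) g x =
   \esum_(v in [set v : outcome n | forall i, i \notin A -> v i = 0%N]) \esum_(x in fib A v) g x)%E.
Proof.
move=> g0; rewrite esum_esum //.
rewrite (reindex_esum [set: outcome n] _ (fun x => (proj A x, x))) //; split.
- move=> x _ /=; split => [i iA|i iA]; rewrite /proj ffunE; first by rewrite (negbTE iA).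
  by rewrite iA.
- by move=> x y _ _ [].
- move=> [v x] [/= Rv Fx]; exists x => //; congr (_, _); apply/ffunP => i.
  rewrite /proj ffunE; case: ifP => iA; first by rewrite Fx.
  by rewrite Rv // iA.
Qed.

Lemma nlog_ge0 A x : 0 <= - ln (marg p A x).
Proof. by rewrite oppr_ge0 ln_le0 // mg_le1. Qed.

Lemma EF A : ent p A = (\esum_(x in [set: outcome n]) (p x * - ln (marg p A x))%:E)%E.
Proof.
rewrite (esum_part A); last by move=> x; rewrite lee_fin mulr_ge0 // nlog_ge0.
rewrite /ent; apply: eq_esum => v Rv.
rewrite (eq_esum (b := fun x => ((- ln (marg p A v))%:E * (p x)%:E)%E)); last first.
  by move=> x Fx; rewrite -EFinM mulrC (mg_eq Fx).
rewrite esumZ ?nlog_ge0; try by move=> x; rewrite lee_fin.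
by rewrite fibE -EFinM; congr (_%:E); ring.
by [].
Qed.

Lemma ent_ge0 A : (0 <= ent p A)%E.
Proof. by rewrite EF; apply: esum_ge0 => x _; rewrite lee_fin mulr_ge0 // nlog_ge0. Qed.

Lemma ent_mono A B : A \subset B -> (ent p A <= ent p B)%E.
Proof.
move=> sAB; rewrite !EF; apply: le_esum => x _; rewrite lee_fin.
have [px0|px] := eqVneq (p x) 0; first by rewrite px0 !mul0r.
have pxp : 0 < p x by rewrite lt0r px p0.
rewrite ler_wpM2l // lerN2 ler_ln ?posrE ?mg_gt0 //; exact: mg_mono.
Qed.


Lemma esum_if (T : choiceType) (S : set T) (g : T -> \bar RR) :
  (\esum_(y in [set: T]) (if y \in S then g y else 0) = \esum_(y in S) g y)%E.
Proof. by rewrite [RHS]esum_mkcond. Qed.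

Lemma fib_sym A x y : fib A x y -> fib A y x.
Proof. by move=> H i iA; rewrite H. Qed.

Lemma S_le1 A B :
  (\esum_(x in [set: outcome n])
     (p x * (marg p A x * marg p B x / (marg p (A :|: B) x * marg p (A :&: B) x)))%:E <= 1)%E.
Proof.
set a := marg p A; set b := marg p B; set u := marg p (A :|: B); set c := marg p (A :&: B).
have u0 x : 0 <= u x by apply: mg_ge0.
have c0 x : 0 <= c x by apply: mg_ge0.
pose K x := p x / (u x * c x).
have K0 x : 0 <= K x by rewrite /K divr_ge0 // mulr_ge0.
pose F x y z : \bar RR := if y \in fib A x then (if z \in fib B x then (K x * p y * p z)%:E else 0) else 0.
have F0 x y z : (0 <= F x y z)%E.
  rewrite /F; repeat case: ifP => _ //.
  by rewrite lee_fin !mulr_ge0 // invr_ge0 mulr_ge0.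
have E1 x : (p x * (a x * b x / (u x * c x)))%:E =
    (\esum_(y in [set: outcome n]) \esum_(z in [set: outcome n]) F x y z)%E.
  rewrite (eq_esum (b := fun y => if y \in fib A x then
      \esum_(z in fib B x) (K x * p y * p z)%:E else 0%E)); last first.
    move=> y _; rewrite /F; case: ifP => _; first by rewrite esum_if.
    by rewrite esum1.
  rewrite esum_if.
  rewrite (eq_esum (b := fun y => ((K x * p y)%:E * (b x)%:E)%E)); last first.
    move=> y _; rewrite -fibE -esumZ ?mulr_ge0 ?invr_ge0 ?mulr_ge0 //; try by move=> z; rewrite lee_fin.
  rewrite (eq_esum (b := fun y => ((K x * b x)%:E * (p y)%:E)%E)); last first.
    by move=> y _; rewrite -!EFinM; congr (_%:E); ring.
  rewrite esumZ ?mulr_ge0 ?invr_ge0 ?mulr_ge0 ?mg_ge0 //; try by move=> z; rewrite lee_fin.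
  by rewrite fibE -!EFinM /K; congr (_%:E); rewrite /a /b; ring.
under eq_esum => x _ do rewrite E1.
rewrite esum_swap; last by move=> x y; apply: esum_ge0.
pose G y z : \bar RR := if z \in fib (A :&: B) y then (p y / c y * p z)%:E else 0.
apply: (@le_trans _ _ (\esum_(y in [set: outcome n]) \esum_(z in [set: outcome n]) G y z)%E).
  apply: le_esum => y _; rewrite esum_swap //; apply: le_esum => z _.
  have [zC|zC] := boolP (z \in fib (A :&: B) y); last first.
    rewrite /G (negbTE zC) esum1 // => x _; rewrite /F.
    case: ifP => // /set_mem yA; case: ifP => // /set_mem zB.
    exfalso; move/negP: zC; apply; apply/mem_set => i.
    rewrite inE => /andP[iA iB]; by rewrite zB // yA.
  pose E := fib A y `&` fib B z.
  rewrite (eq_esum (b := fun x => if x \in E then ((p y / c y * p z)%:E * (p x / u x)%:E)%E else 0%E)); last first.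
    move=> x _; rewrite /F; have [xE|xE] := boolP (x \in E).
      have [xA xB] := set_mem xE.
      rewrite ifT; last by apply/mem_set/fib_sym.
      rewrite ifT; last by apply/mem_set/fib_sym.
      rewrite /K; have -> : c x = c y by apply: mg_eq => i; rewrite inE => /andP[iA _]; apply: xA.
      rewrite -EFinM invfM; congr (_%:E); ring.
    case: ifP => // /set_mem yA; case: ifP => // /set_mem zB.
    by exfalso; move/negP: xE; apply; apply/mem_set; split; apply: fib_sym.
  rewrite esum_if esumZ; last by move=> x; rewrite lee_fin divr_ge0.
    rewrite /G zC -[X in (_ <= X)%E]mule1; apply: lee_wpmul2l; first by rewrite lee_fin !mulr_ge0 ?invr_ge0.
    have [[x0 Ex0]|nE] := pselect (exists x0, E x0); last first.
      by rewrite esum1 // => x Ex; exfalso; apply: nE; exists x.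
    have -> : E = fib (A :|: B) x0.
      case: Ex0 => x0A x0B; apply/seteqP; split => x.
        move=> [xA xB] i; rewrite inE => /orP[iA|iB]; first by rewrite xA // x0A.
        by rewrite xB // x0B.
      by move=> Hx; split => i iI; rewrite Hx ?inE ?iI ?orbT //; [exact: x0A|exact: x0B].
    rewrite (eq_esum (b := fun x => ((u x0)^-1%:E * (p x)%:E)%E)); last first.
      move=> x Hx; have -> : u x = u x0 := mg_eq Hx.
      by rewrite -EFinM mulrC.
    rewrite esumZ ?invr_ge0 //; try by move=> x; rewrite lee_fin.
    rewrite fibE -EFinM lee_fin.
    have [->|u0'] := eqVneq (u x0) 0; first by rewrite invr0 mul0r.
    by rewrite mulVf.
  by rewrite !mulr_ge0 ?invr_ge0.
apply: (@le_trans _ _ (\esum_(y in [set: outcome n]) (p y)%:E)%E); last by rewrite p1.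
apply: le_esum => y _.
rewrite (eq_esum (b := fun z => if z \in fib (A :&: B) y then ((p y / c y)%:E * (p z)%:E)%E else 0%E)); last first.
  by move=> z _; rewrite /G -EFinM.
rewrite esum_if esumZ ?divr_ge0 //; try by move=> z; rewrite lee_fin.
rewrite fibE -EFinM lee_fin.
have [->|c0'] := eqVneq (c y) 0; first by rewrite invr0 mulr0 mul0r.
by rewrite divfK.
Qed.

Lemma ent_sub A B : (ent p (A :|: B) + ent p (A :&: B) <= ent p A + ent p B)%E.
Proof.
set a := marg p A; set b := marg p B; set u := marg p (A :|: B); set c := marg p (A :&: B).
have key : (ent p (A :|: B) + ent p (A :&: B) + 1 <= ent p A + ent p B +
   \esum_(x in [set: outcome n]) (p x * (a x * b x / (u x * c x)))%:E)%E.
  rewrite !EF -p1 -!esumD.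
  all: try (by move=> ? _; rewrite ?adde_ge0 // ?lee_fin ?mulr_ge0 // ?invr_ge0 ?mulr_ge0 ?mg_ge0 ?nlog_ge0 //; rewrite ?lee_fin ?mulr_ge0 ?nlog_ge0).
  apply: le_esum => x _; rewrite -!EFinD lee_fin.
  have [px0|px] := eqVneq (p x) 0; first by rewrite px0 !mul0r; lra.
  have pxp : 0 < p x by rewrite lt0r px p0.
  have ap : 0 < a x by apply: mg_gt0.
  have bp : 0 < b x by apply: mg_gt0.
  have up : 0 < u x by apply: mg_gt0.
  have cp : 0 < c x by apply: mg_gt0.
  set r := a x * b x / (u x * c x).
  have rp : 0 < r by rewrite /r divr_gt0 // mulr_gt0.
  have lnr : ln r = ln (a x) + ln (b x) - ln (u x) - ln (c x).
    rewrite /r ln_div ?posrE ?mulr_gt0 // !lnM ?posrE //; ring.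
  have lr : ln r <= r - 1.
    have e : 1 + (r - 1) = r by ring.
    by have := @le_ln1Dx _ (r - 1); rewrite e; apply; lra.
  have : p x * ln r <= p x * (r - 1) by rewrite ler_wpM2l // p0.
  rewrite lnr; nra.
have key2 : (ent p (A :|: B) + ent p (A :&: B) + 1 <= ent p A + ent p B + 1)%E.
  by apply: le_trans key _; rewrite leeD2l // S_le1.
by rewrite leeD2rE in key2.
Qed.

Lemma ent0 : ent p fset0 = 0%E.
Proof.
rewrite EF esum1 // => x _.
rewrite /marg.
have -> : [set x0 : outcome n | forall i, i \in fset0 -> x0 i = x i] = [set: outcome n].
  by apply/seteqP; split => // y _ i; rewrite inE.
by rewrite p1 /= ln1 oppr0 mulr0.
Qed.


Hypothesis fe : finite_ent p.

Lemma ent_fin A : (ent p A < +oo)%E.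
Proof.
rewrite -(set_enum A); elim: (enum A) => [|m r IH].
  have -> : [set x | x \in [::]]%SET = fset0 :> {set 'I_n} by apply/setP => x; rewrite !inE.
  by rewrite ent0 ltry.
have -> : [set x | x \in m :: r]%SET = [set m]%SET :|: [set x | x \in r]%SET.
  by apply/setP => x; rewrite !inE.
apply: (@le_lt_trans _ _ (ent p [set m]%SET + ent p [set x | x \in r]%SET)%E).
  by apply: le_trans (ent_sub _ _); apply: leeDl; apply: ent_ge0.
by apply: lte_add_pinfty => //; apply: fe.
Qed.

Lemma entE A : ent p A = (H p A)%:E.
Proof. by rewrite /H fineK // ge0_fin_numE ?ent_ge0 ?ent_fin. Qed.

Lemma H_mono A B : A \subset B -> H p A <= H p B.
Proof. by move=> sAB; rewrite -lee_fin -!entE ent_mono. Qed.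

Lemma H_sub A B : H p (A :|: B) + H p (A :&: B) <= H p A + H p B.
Proof. by rewrite -lee_fin !EFinD -!entE ent_sub. Qed.

End Ent.

Close Scope classical_set_scope.
From mathcomp Require Import ssrbool eqtype ssrnat seq fintype finset bigop.
Import Order.TTheory GRing.Theory Num.Theory.
Local Open Scope ring_scope.



Lemma count_ge2 (T : Type) (x0 : T) (a : pred T) (s : seq T) j1 j2 :
  (j1 < size s)%N -> (j2 < size s)%N -> j1 <> j2 -> a (nth x0 s j1) -> a (nth x0 s j2) ->
  (1 < count a s)%N.
Proof.
have h1 (s' : seq T) k : (k < size s')%N -> a (nth x0 s' k) -> (0 < count a s')%N.
  by move=> ks ak; rewrite -has_count; apply/(has_nthP x0); exists k.
elim: s j1 j2 => [|x s IH] [|k1] [|k2] //= l1 l2 ne a1 a2.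
- by rewrite a1 add1n ltnS (h1 _ _ l2 a2).
- by rewrite a2 add1n ltnS (h1 _ _ l1 a1).
- have := IH k1 k2 l1 l2 (fun e => ne (congr1 S e)) a1 a2.
  by case: (a x) => /= c; rewrite ?add1n ?add0n //; apply: ltn_trans c _.
Qed.

Lemma count2P (T : Type) (x0 : T) (a : pred T) (s : seq T) :
  (1 < count a s)%N -> exists j1 j2, [/\ (j1 < size s)%N, (j2 < size s)%N, j1 <> j2,
     a (nth x0 s j1) & a (nth x0 s j2)].
Proof.
elim: s => [|x s IH] //=; case ax: (a x) => /=.
  rewrite add1n ltnS -has_count => /(has_nthP x0)[k ks ak].
  by exists 0%N, k.+1; split.
rewrite add0n => /IH[j1 [j2 [l1 l2 ne a1 a2]]].
by exists j1.+1, j2.+1; split => // -[].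
Qed.

Local Notation fset0' := (@finset.set0 _).

Lemma sum_one n (psi : {set 'I_n} -> Rdefinitions.R) (s : seq {set 'I_n}) :
  psi fset0' = 0 -> (count (fun Y => Y != fset0') s <= 1)%N ->
  \sum_(Y <- s) psi Y = psi (Defs.bigU s).
Proof.
move=> p0; elim: s => [|Y s IH] /=; first by rewrite big_nil /Defs.bigU big_nil p0.
rewrite big_cons /Defs.bigU big_cons -/(Defs.bigU s).
case: eqP => [->|_] /=; first by rewrite add0n p0 add0r finset.set0U => /IH.
rewrite add1n ltnS leqn0 => /eqP c0.
have all0 : all (fun Y => Y == fset0') s.
  have : ~~ has (fun Y => Y != fset0') s by rewrite has_count c0.
  by move/hasPn => H; apply/allP => y /H; rewrite negbK.
rewrite big_seq big1 ?addr0; last by move=> y ys; move/allP: all0 => /(_ y ys) /eqP ->.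
suff -> : Defs.bigU s = fset0' by rewrite finset.setU0.
elim: s all0 {IH c0} => [|y s IH] /=; first by rewrite /Defs.bigU big_nil.
by move=> /andP[/eqP -> /IH]; rewrite /Defs.bigU big_cons => ->; rewrite finset.setU0.
Qed.

Section Poly.
Variable n : nat.
Variable h : {set 'I_n} -> Rdefinitions.R.
Hypothesis hmono : forall A B : {set 'I_n}, A \subset B -> h A <= h B.
Hypothesis hsub : forall A B : {set 'I_n}, h (A :|: B) + h (A :&: B) <= h A + h B.

Notation BU := Defs.bigU.
Arguments Defs.bigU : simpl never.
Implicit Types (A B Q Z J X Y W C : {set 'I_n}) (s : seq {set 'I_n}) (K : cmi n) (f : canform n).
Definition cH (Q Z : {set 'I_n}) := h (Q :|: Z) - h Z.
Definition Def (s : seq {set 'I_n}) Z := \sum_(Q <- s) cH Q Z - cH (Defs.bigU s) Z.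
Definition MI A B Z := cH A Z + cH B Z - cH (A :|: B) Z.

Lemma cH_ge0 Q Z : 0 <= cH Q Z.
Proof. by rewrite /cH subr_ge0 hmono // finset.subsetUr. Qed.

Lemma cH0 Z : cH fset0 Z = 0.
Proof. by rewrite /cH finset.set0U subrr. Qed.

Lemma MI_mono1 A (A' : {set 'I_n}) B Z : A \subset A' -> MI A B Z <= MI A' B Z.
Proof.
move=> sAA'; rewrite /MI /cH.
have := hsub (A' :|: Z) (A :|: B :|: Z).
have e1 : A' :|: Z :|: (A :|: B :|: Z) = A' :|: B :|: Z.
  apply/setP=> x; rewrite !inE; move/subsetP: sAA' => /(_ x).
  by case: (x \in A); case: (x \in A'); case: (x \in B); case: (x \in Z) => // ->.
rewrite e1 => H1.
have H2 : h (A :|: Z) <= h ((A' :|: Z) :&: (A :|: B :|: Z)).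
  apply: hmono; apply/subsetP=> x; rewrite !inE; move/subsetP: sAA' => /(_ x).
  by case: (x \in A); case: (x \in A'); case: (x \in B); case: (x \in Z) => //= ->.
lra.
Qed.

Lemma MIC A B Z : MI A B Z = MI B A Z.
Proof. rewrite /MI (finset.setUC A B); lra. Qed.

Lemma MI_mono A (A' : {set 'I_n}) B (B' : {set 'I_n}) Z : A \subset A' -> B \subset B' -> MI A B Z <= MI A' B' Z.
Proof.
move=> sA sB; apply: (le_trans (MI_mono1 _ _ sA)).
by rewrite MIC [X in _ <= X]MIC; apply: MI_mono1.
Qed.

Lemma MI_ge0 A B Z : 0 <= MI A B Z.
Proof.
have := @MI_mono fset0 A B B Z (finset.sub0set _) (subxx _).
by rewrite /MI cH0 finset.set0U add0r subrr.
Qed.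

Lemma bigU_cons Q s : Defs.bigU (Q :: s) = Q :|: BU s.
Proof. by rewrite /Defs.bigU big_cons. Qed.

Lemma bigU_nil : BU [::] = fset0 :> {set 'I_n}.
Proof. by rewrite /Defs.bigU big_nil. Qed.

Lemma Def_nil Z : Def [::] Z = 0.
Proof. by rewrite /Def big_nil bigU_nil cH0 subrr. Qed.

Lemma Def_cons Q s Z : Def (Q :: s) Z = Def s Z + MI Q (Defs.bigU s) Z.
Proof. rewrite /Def big_cons bigU_cons /MI. lra. Qed.

Lemma Def_ge0 s Z : 0 <= Def s Z.
Proof.
elim: s => [|Q s IH]; first by rewrite Def_nil.
by rewrite Def_cons addr_ge0 // MI_ge0.
Qed.

Lemma bigU_mono (Y G : seq {set 'I_n}) : all2 (fun a b : {set 'I_n} => a \subset b) Y G ->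
  BU Y \subset BU G.
Proof.
elim: Y G => [|y Y IH] [|g G] //=.
by move=> /andP[syg /IH sYG]; rewrite !bigU_cons finset.setUSS.
Qed.

Lemma Def_mono (Y G : seq {set 'I_n}) Z : all2 (fun a b : {set 'I_n} => a \subset b) Y G ->
  Def Y Z <= Def G Z.
Proof.
elim: Y G => [|y Y IH] [|g G] //= /andP[syg sYG].
rewrite !Def_cons lerD ?IH //; apply: MI_mono => //; exact: bigU_mono.
Qed.

Lemma Def_small s Z : (size s <= 1)%N -> Def s Z = 0.
Proof.
case: s => [|Q [|]] //= _; first by rewrite Def_nil.
by rewrite Def_cons Def_nil bigU_nil /MI cH0 finset.setU0; lra.
Qed.

Lemma MI0 B Z : MI fset0 B Z = 0.
Proof. by rewrite /MI cH0 finset.set0U; lra. Qed.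

Lemma bigU_nonempties s : BU (nonempties s) = BU s.
Proof.
elim: s => [|Q s IH] //; rewrite /nonempties /= bigU_cons.
case: eqP => [->|_]; first by rewrite finset.set0U.
by rewrite bigU_cons -IH.
Qed.

Lemma Def_nonempties s Z : Def (nonempties s) Z = Def s Z.
Proof.
elim: s => [|Q s IH] //; rewrite /nonempties /= Def_cons.
case: eqP => [->|_]; first by rewrite MI0 addr0.
by rewrite Def_cons (bigU_nonempties s) IH.
Qed.


Ltac sdec := first [apply/setP => ? | apply/subsetP => ?]; rewrite ?inE;
  repeat (case: (_ \in _)); rewrite ?orbT ?andbF ?orbF //.

Lemma absorb J Z X : h (J :|: Z) = h Z -> h (X :|: J :|: Z) = h (X :|: Z).
Proof.
move=> hJ; have := hsub (X :|: Z) (J :|: Z).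
have -> : X :|: Z :|: (J :|: Z) = X :|: J :|: Z by sdec.
have : h Z <= h ((X :|: Z) :&: (J :|: Z)) by apply: hmono; sdec.
have : h (X :|: Z) <= h (X :|: J :|: Z) by apply: hmono; sdec.
rewrite hJ; lra.
Qed.

Lemma sandwich J Z X Y : h (J :|: Z) = h Z -> X \subset Y -> Y \subset X :|: J ->
  h (X :|: Z) = h (Y :|: Z).
Proof.
move=> hJ sXY sYXJ; apply/eqP; rewrite eq_le; apply/andP; split.
  by apply: hmono; apply: finset.setSU.
rewrite -(absorb X hJ); apply: hmono; exact: finset.setSU.
Qed.

Lemma liftJ J Z (Z' : {set 'I_n}) : h (J :|: Z) = h Z -> Z \subset Z' -> h (J :|: Z') = h Z'.
Proof.
move=> hJ sZ; have := absorb Z' hJ.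
have -> : Z' :|: Z = Z' by apply/setUidPl.
have -> // : Z' :|: J :|: Z = J :|: Z'.
apply/setP => x; rewrite !inE; move/subsetP: sZ => /(_ x).
by case: (x \in Z); case: (x \in Z'); case: (x \in J) => // ->.
Qed.

Lemma subJ J (J' : {set 'I_n}) Z : J' \subset J -> h (J :|: Z) = h Z -> h (J' :|: Z) = h Z.
Proof.
move=> sJ hJ; apply/eqP; rewrite eq_le; apply/andP; split.
  by rewrite -hJ; apply: hmono; apply: finset.setSU.
by apply: hmono; apply: finset.subsetUr.
Qed.

Lemma unionJ J (J' : {set 'I_n}) Z : h (J :|: Z) = h Z -> h (J' :|: Z) = h Z ->
  h (J :|: J' :|: Z) = h Z.
Proof. by move=> h1 h2; rewrite (absorb J h2). Qed.

Lemma cH_subJ J Z A : h (J :|: Z) = h Z -> cH (A :\: J) Z = cH A Z.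
Proof.
move=> hJ; rewrite /cH (sandwich hJ (X := A :\: J) (Y := A)) //; first by apply: subsetDl.
by sdec.
Qed.

Lemma bigU_mapD J s : BU [seq Q :\: J | Q <- s] = BU s :\: J.
Proof.
elim: s => [|Q s IH] /=; first by rewrite !bigU_nil set0D.
by rewrite !bigU_cons IH setDUl.
Qed.

Lemma Def_map_sub J Z s : h (J :|: Z) = h Z -> Def [seq Q :\: J | Q <- s] Z = Def s Z.
Proof.
move=> hJ; elim: s => [|Q s IH] //=; rewrite !Def_cons IH bigU_mapD; congr (_ + _).
by rewrite /MI -setDUl !(cH_subJ _ hJ).
Qed.

Lemma Def_cond J (Z1 Z2 : {set 'I_n}) s : Z1 \subset Z2 -> Z2 \subset Z1 :|: J ->
  h (J :|: Z1) = h Z1 -> Def s Z2 = Def s Z1.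
Proof.
move=> s12 s21 hJ.
have hA A : h (A :|: Z2) = h (A :|: Z1).
  have := sandwich hJ (X := A :|: Z1) (Y := A :|: Z2).
  have -> : A :|: Z1 :|: Z1 = A :|: Z1 by sdec.
  have -> : A :|: Z2 :|: Z1 = A :|: Z2.
    apply/setP => x; rewrite !inE; move/subsetP: s12 => /(_ x).
    by case: (x \in Z1); case: (x \in Z2); case: (x \in A) => // ->.
  move=> -> //; first by apply: finset.setUS.
  apply/subsetP => x; rewrite !inE; move/subsetP: s21 => /(_ x); rewrite !inE.
  by case: (x \in Z1); case: (x \in Z2); case: (x \in A); case: (x \in J) => // ->.
have hc A : cH A Z2 = cH A Z1.
  by rewrite /cH hA; have := hA fset0; rewrite !finset.set0U => ->.
rewrite /Def hc; congr (_ - _); apply: eq_bigr => Q _; exact: hc.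
Qed.

Lemma all2_map_sub (f : {set 'I_n} -> {set 'I_n}) s : (forall X, f X \subset X) ->
  all2 (fun a b : {set 'I_n} => a \subset b) [seq f X | X <- s] s.
Proof. by move=> fs; elim: s => [|X s IH] //=; rewrite fs IH. Qed.

Lemma bigU_mapI A s : BU [seq A :&: X | X <- s] = A :&: BU s.
Proof.
elim: s => [|Q s IH] /=; first by rewrite !bigU_nil setI0.
by rewrite !bigU_cons IH setIUr.
Qed.

Lemma AD G Z A : Def G Z = 0 -> A \subset BU G ->
  cH A Z = \sum_(X <- G) cH (A :&: X) Z.
Proof.
move=> D0 sA.
have hm := Def_mono Z (all2_map_sub G (f := fun X => A :&: X) (fun X => subsetIr A X)).
have h0 := Def_ge0 [seq A :&: X | X <- G] Z.
have : Def [seq A :&: X | X <- G] Z = 0 by apply/eqP; rewrite eq_le h0 -D0 hm.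
rewrite /Def big_map bigU_mapI (setIidPl sA) => /eqP; rewrite subr_eq0 => /eqP ->.
done.
Qed.

Lemma det_elem s Z (m : 'I_n) : Def s Z = 0 -> (1 < count (fun X => m \in X) s)%N ->
  h ([set m] :|: Z) = h Z.
Proof.
move=> D0 c2.
pose f X : {set 'I_n} := if m \in X then [set m] else fset0.
have fs X : f X \subset X by rewrite /f; case: ifP => mX; rewrite ?sub1set ?finset.sub0set.
have hm := Def_mono Z (all2_map_sub s fs).
have h0 := Def_ge0 [seq f X | X <- s] Z.
have D1 : Def [seq f X | X <- s] Z = 0 by apply/eqP; rewrite eq_le h0 -D0 hm.
have Es : \sum_(X <- s) cH (f X) Z = (count (fun X => m \in X) s)%:R * cH [set m] Z.
  elim: s {D0 c2 hm h0 D1} => [|X s IH]; first by rewrite big_nil mul0r.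
  rewrite big_cons IH /= /f; case: ifP => _ /=; rewrite ?cH0 ?add1n ?add0n ?mulrSr ?mulrS ?mulrDl ?mul1r ?add0r /=; try lra.
have Eb : BU [seq f X | X <- s] = if has (fun X => m \in X) s then [set m] else fset0.
  elim: s {D0 c2 hm h0 D1 Es} => [|X s IH] /=; first by rewrite bigU_nil.
  rewrite bigU_cons IH /f; case: ifP => mX /=; last by rewrite finset.set0U.
  by case: ifP; rewrite ?finset.setUid ?finset.setU0.
have hs : has (fun X => m \in X) s by rewrite has_count; apply: ltn_trans c2.
move: D1; rewrite /Def big_map Es Eb hs.
set c := count _ _; have c2' : (2%:R <= c%:R :> Rdefinitions.R) by rewrite ler_nat.
have := cH_ge0 [set m] Z; rewrite /cH => H0 H1.
have : (c%:R - 1) * (h ([set m] :|: Z) - h Z) = 0 by rewrite -H1; ring.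
move/eqP; rewrite mulf_eq0 subr_eq0 => /orP[/eqP E|/eqP].
by move: c2'; rewrite E; lra.
by move/eqP; rewrite subr_eq0 => /eqP.
Qed.


Lemma bigU_sub X s : X \in s -> X \subset BU s.
Proof.
elim: s => [|Y s IH] //=; rewrite inE bigU_cons => /orP[/eqP ->|/IH]; first exact: finset.subsetUl.
by move=> sX; apply: (subset_trans sX); apply: finset.subsetUr.
Qed.

Lemma ML (G T : seq {set 'I_n}) C Z :
  Def G C = 0 ->
  (forall m, count (fun X => m \in X) G <= 1)%N ->
  C \subset Z -> Z \subset C :|: BU G ->
  BU T \subset BU G ->
  (forall (j1 j2 : nat) (m1 m2 : 'I_n), (j1 < size T)%N -> (j2 < size T)%N -> j1 <> j2 ->
     m1 \in nth fset0 T j1 -> m2 \in nth fset0 T j2 ->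
     exists i1 i2 : nat, [/\ (i1 < size G)%N, (i2 < size G)%N, i1 <> i2,
        m1 \in nth fset0 G i1 & m2 \in nth fset0 G i2]) ->
  Def T Z = 0.
Proof.
move=> DG cG sCZ sZ sT pw.
set U := BU G; set W := Z :&: U.
pose phi A := cH A C.
have eX X : cH X Z = phi (X :|: W) - phi W.
  rewrite /phi /cH.
  have eZ : W :|: C = Z.
    by rewrite /W finset.setUIl (setUidPl sCZ) finset.setUC; apply/setIidPl.
  rewrite -finset.setUA eZ.
  lra.
have sWU : W \subset U by apply: finset.subsetIr.
pose psi Gi A := phi ((A :|: W) :&: Gi) - phi (W :&: Gi).
have dec A : A \subset U -> phi (A :|: W) - phi W = \sum_(Gi <- G) psi Gi A.
  move=> sA; rewrite /psi sumrB /phi (AD DG) ?finset.subUset ?sA //.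
  rewrite [cH W C](AD DG) //; congr (_ - _); apply: eq_bigr => Gi _.
have sXU X : X \in T -> X \subset U.
  by move=> XT; apply: (subset_trans _ sT); apply: bigU_sub.
rewrite /Def eX big_seq (eq_bigr (fun X => \sum_(Gi <- G) psi Gi X)); last first.
  by move=> X XT; rewrite eX dec // sXU.
rewrite -big_seq exchange_big /= dec // big_seq [X in _ - X]big_seq -sumrB.
apply: big1 => Gi GiG; apply/eqP; rewrite subr_eq0; apply/eqP.
have pI A : psi Gi A = psi Gi (Gi :&: A).
  rewrite /psi; congr (_ - _); congr (phi _); apply/setP => x; rewrite !inE.
  by case: (x \in Gi); case: (x \in A); case: (x \in Z); case: (x \in U).
rewrite (eq_bigr (fun X => psi Gi (Gi :&: X))); last by move=> X _; rewrite pI.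
rewrite -(big_map (fun X => Gi :&: X) xpredT) sum_one; first by rewrite bigU_mapI -pI.
  by rewrite /psi finset.set0U; lra.
rewrite leqNgt; apply/negP => /(count2P fset0) [j1 [j2 [l1 l2 ne a1 a2]]].
rewrite size_map in l1 l2.
rewrite (nth_map fset0) // in a1; rewrite (nth_map fset0) // in a2.
case/set0Pn: a1 => m1; rewrite inE => /andP[m1G m1T].
case/set0Pn: a2 => m2; rewrite inE => /andP[m2G m2T].
have [i1 [i2 [k1 k2 ne12 mi1 mi2]]] := pw _ _ _ _ l1 l2 ne m1T m2T.
set i0 := index Gi G.
have i0s : (i0 < size G)%N by rewrite index_mem.
have Gi0 : nth fset0 G i0 = Gi by rewrite nth_index.
have e1 : i1 = i0.
  apply/eqP; apply/negPn/negP => /eqP ne1; have := cG m1.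
  by rewrite leqNgt (@count_ge2 _ fset0 _ G i1 i0) // Gi0.
have e2 : i2 = i0.
  apply/eqP; apply/negPn/negP => /eqP ne1; have := cG m2.
  by rewrite leqNgt (@count_ge2 _ fset0 _ G i2 i0) // Gi0.
by apply: ne12; rewrite e1 e2.
Qed.


Lemma det_set C A : (forall m, m \in A -> h ([set m] :|: C) = h C) -> h (A :|: C) = h C.
Proof.
move=> hA; rewrite -(set_enum A).
have : {subset enum A <= A} by move=> x; rewrite mem_enum.
elim: (enum A) => [|m r IH] sr.
  have -> : [set x | x \in [::]] = fset0 :> {set 'I_n} by apply/setP => x; rewrite !inE.
  by rewrite finset.set0U.
have -> : [set x | x \in m :: r] = [set m] :|: [set x | x \in r] by apply/setP => x; rewrite !inE.
apply: unionJ; first by apply: hA; apply: sr; rewrite inE eqxx.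
by apply: IH => x xr; apply: sr; rewrite inE xr orbT.
Qed.

Lemma Def_pur K : Def (mems (pur K)) (cond K) = Def (mems K) (cond K).
Proof. by rewrite /pur /= Def_nonempties Def_map_sub // finset.setUid. Qed.

Lemma canE (K0 : cmi n) : can K0 =
  if (size (mems K0) <= 1)%N then None else
  Some (Canform (cond K0) (rep_idx (mems K0))
    (if (rep_idx (mems K0) != fset0) &&
        (size (nonempties [seq Q :\: rep_idx (mems K0) | Q <- mems K0]) <= 1)%N
     then [::] else nonempties [seq Q :\: rep_idx (mems K0) | Q <- mems K0])).
Proof. by rewrite /can; case: ifP => //; case: ifP. Qed.

Lemma rep_idxP s m : m \in rep_idx s -> (1 < count (fun X => m \in X) s)%N.
Proof. by rewrite /rep_idx; case: ifP => _; rewrite ?inE. Qed.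

Lemma K_I K : Def (mems K) (cond K) = 0 -> h (IK K :|: cond K) = h (cond K).
Proof.
rewrite -Def_pur => D0; apply: det_set => m /rep_idxP; exact: det_elem.
Qed.

Lemma K_PKdef K : Def (mems K) (cond K) = 0 -> Def (PK K) (cond K) = 0.
Proof.
move=> D0; have hI := K_I D0; move: D0; rewrite -Def_pur /PK canE.
case: ifP => [s1|_ D0]; first by move=> _; apply: Def_small.
case: ifP => _; first by rewrite Def_nil.
by rewrite Def_nonempties (Def_map_sub _ hI).
Qed.

Lemma K_PKcount K m : (count (fun X => m \in X) (PK K) <= 1)%N.
Proof.
rewrite /PK canE; case: ifP => [s1|s2]; first by apply: leq_trans (count_size _ _) s1.
case: ifP => _ //=; rewrite /nonempties count_filter count_map.
apply: (@leq_trans (count (fun X => m \in X :\: IK K) (mems (pur K)))).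
  by apply: sub_count => X /andP[].
case mI: (m \in IK K).
  rewrite (eq_count (a2 := pred0)) ?count_pred0 // => X /=.
  by rewrite inE mI.
apply: (@leq_trans (count (fun X => m \in X) (mems (pur K)))).
  by apply: sub_count => X /=; rewrite inE => /andP[].
have s2' : (2 <= size (mems (pur K)))%N by rewrite ltnNge s2.
move: mI; rewrite /IK /rep_idx s2' inE; case: leqP => //.
Qed.


Lemma pur_sub K X : X \in mems (pur K) -> X \subset ~: cond K.
Proof.
rewrite /pur /= /nonempties mem_filter => /andP[_ /mapP[Q _ ->]].
by rewrite finset.setDE; apply: finset.subsetIr.
Qed.

Lemma rep_sub K : rep_idx (mems (pur K)) \subset ~: cond K.
Proof.
apply/subsetP => m /rep_idxP c2.
have : has (fun X => m \in X) (mems (pur K)) by rewrite has_count; apply: ltn_trans c2.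
by case/hasP => X /pur_sub /subsetP sX /sX.
Qed.

Lemma canP_sub K f : can (pur K) = Some f ->
  [/\ cC f = cond K, cI f = rep_idx (mems (pur K)), cI f \subset ~: cond K &
      forall X, X \in cP f -> X \subset ~: cond K].
Proof.
rewrite canE; case: ifP => // _ [<-] /=; split => //; first exact: rep_sub.
move=> X; case: ifP => // _; rewrite /nonempties mem_filter => /andP[_ /mapP[Q QL ->]].
by apply: subset_trans (pur_sub QL); apply: subsetDl.
Qed.

Lemma Kback K f : can (pur K) = Some f -> h (cI f :|: cC f) = h (cC f) ->
  Def (cP f) (cC f) = 0 -> Def (mems K) (cond K) = 0.
Proof.
move=> cf; have cf' := cf; move: cf'; rewrite canE; case: ifP => // _ [<-] /= hI.
move=> D0; rewrite -Def_pur -(Def_map_sub (mems (pur K)) hI) -Def_nonempties.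
move: D0; case: ifP => [/andP[_ s1] _|_ //]; by apply: Def_small.
Qed.

Lemma Knone K : can (pur K) = None -> Def (mems K) (cond K) = 0.
Proof. by rewrite -Def_pur canE; case: ifP => // s1 _; apply: Def_small. Qed.

Lemma pur_disj (C0 : {set 'I_n}) s : all (fun X => X \subset ~: C0) s ->
  all (fun X => X != fset0) s -> pur (Cmi C0 s) = Cmi C0 s.
Proof.
move=> a1 a2; rewrite /pur /=; congr Cmi.
have -> : [seq Q :\: C0 | Q <- s] = s.
  elim: s a1 {a2} => [|Q s IH] //= /andP[sQ /IH ->]; congr (_ :: _).
  by rewrite finset.setDE; apply/setIidPl.
by apply/all_filterP.
Qed.


Lemma canT (C0 : {set 'I_n}) T : (1 < size T)%N -> all (fun X => X \subset ~: C0) T ->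
  all (fun X => X != fset0) T ->
  can (pur (Cmi C0 T)) = Some (Canform C0 (rep_idx T)
    (if (rep_idx T != fset0) && (size (nonempties [seq Q :\: rep_idx T | Q <- T]) <= 1)%N
     then [::] else nonempties [seq Q :\: rep_idx T | Q <- T])).
Proof. by move=> sT a1 a2; rewrite pur_disj // canE /= leqNgt sT. Qed.

Lemma canDD (C0 D : {set 'I_n}) s0 : D != fset0 -> D \subset ~: C0 ->
  all (fun X => X \subset ~: C0) s0 -> all (fun X => X != fset0) s0 ->
  exists f, can (pur (Cmi C0 [:: D, D & s0])) = Some f /\ D \subset cI f.
Proof.
move=> Dn sD a1 a2; rewrite canT //=; last by rewrite Dn a2.
  eexists; split; first reflexivity; rewrite /=.
  by apply/subsetP => m mD; rewrite /rep_idx /= inE mD.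
by rewrite sD a1.
Qed.

Lemma abs_main K K' : Def (mems K) (cond K) = 0 ->
  (obind (fun K'' => can (pur K'')) (Rcmi K K') = None /\ cond K \subset cond K')
  \/ (exists f : canform n,
        [/\ obind (fun K'' => can (pur K'')) (Rcmi K K') = Some f, cI f = fset0,
            BU (cP f) \subset BU (PK K),
            cond K \subset cC f /\ cC f \subset (cond K :|: BU (PK K)) :\: BU (cP f) &
            forall (j1 j2 : nat) (m1 m2 : 'I_n),
              (j1 < size (cP f))%N -> (j2 < size (cP f))%N -> j1 <> j2 ->
              m1 \in nth fset0 (cP f) j1 -> m2 \in nth fset0 (cP f) j2 ->
              exists i1 i2 : nat,
                [/\ (i1 < size (PK K))%N, (i2 < size (PK K))%N, i1 <> i2,
                    m1 \in nth fset0 (PK K) i1 & m2 \in nth fset0 (PK K) i2]]) ->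
  Def (mems K') (cond K') = 0.
Proof.
move=> DK.
case cf: (can (pur K')) => [f'|]; last by move=> _; exact: Knone.
have [eC eI sI sP] := canP_sub cf.
rewrite /Rcmi cf /=.
set I := IK K; set D := cI f' :\: I; set T := nonempties [seq P :\: I | P <- cP f'].
set C'' := cC f' :\: I.
have hI : h (I :|: cond K) = h (cond K) := K_I DK.
have sC'' : C'' \subset cC f' by apply: subsetDl.
have Ddisj : D \subset ~: C''.
  apply: subset_trans (subsetDl _ _) (subset_trans sI _); by rewrite setCS -eC.
have Tdisj : all (fun X => X \subset ~: C'') T.
  apply/allP => X; rewrite /T /nonempties mem_filter => /andP[_ /mapP[P PP ->]].
  apply: subset_trans (subsetDl _ _) (subset_trans (sP _ PP) _); by rewrite setCS -eC.
have Tne : all (fun X => X != fset0) T by apply: filter_all.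
have fin : cI f' \subset I -> h (I :|: cC f') = h (cC f') -> Def T (cC f') = 0 ->
    Def (mems K') (cond K') = 0.
  move=> sI' hIC DT; apply: (Kback cf); first exact: subJ sI' hIC.
  by rewrite -(Def_map_sub (cP f') hIC) -Def_nonempties.
case: (eqVneq D fset0) => [D0|Dn].
  have sI' : cI f' \subset I by rewrite -setD_eq0 -/D D0.
  case: (leqP (size T) 1) => [sT|sT].
    case => [[_ sCK]|[f [cN _ _ _ _]]]; last by [].
    apply: fin => //; last exact: Def_small.
    by apply: liftJ hI _; rewrite eC.
  rewrite /= canT // => -[[//]|[f [[<-] /= cI0 sUP [sCf sfS] pw]]].
  move: sUP sCf sfS pw; rewrite cI0 eqxx /=.
  have -> : nonempties [seq Q :\: fset0 | Q <- T] = T.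
    rewrite (eq_map (g := id)) ?map_id; last by move=> Q; apply: setD0.
    by apply/all_filterP.
  move=> sUP sCK sfS pw.
  have hIC : h (I :|: cC f') = h (cC f') by apply: liftJ hI (subset_trans sCK sC'').
  apply: fin => //.
  rewrite (@Def_cond I C'' (cC f')) //; last by apply: liftJ hI sCK.
    apply: (ML (K_PKdef DK) (K_PKcount K) sCK) => //.
    by apply: subset_trans sfS (subsetDl _ _).
  by apply/subsetP => x; rewrite !inE; case: (x \in I); case: (x \in cC f').

have [f0 [cf0 sDf0]] : exists f0, obind (fun K'' => can (pur K''))
    (if (size T <= 1)%N then Some (Cmi C'' [:: D; D]) else Some (Cmi C'' [:: D, D & T]))
    = Some f0 /\ D \subset cI f0.
  by case: ifP => _ /=; [apply: (canDD (s0:=[::])) | apply: canDD].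
rewrite cf0 => -[[//]|[f [[<-] cI0 _ _ _]]].
by move: sDf0; rewrite cI0 subset0 (negbTE Dn).
Qed.

End Poly.

Theorem mainTheorem13 (n : nat) (K K' : cmi n) (p : outcome n -> Rdefinitions.R) :
  is_dist p -> finite_ent p -> sub_cmi K K' -> valid p K -> valid p K'.
Proof.
move=> [p0 p1] fe Hs vK.
case: Hs => [deg|Hs]; first exact: deg.
have hm := H_mono p0 p1 fe.
have hs := H_sub p0 p1 fe.
exact: (abs_main hm hs vK Hs).
Qed.
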